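(* Let $P_n$ be the path graph on vertices $1,2,\dots,n$ (edges $\{i,i+1\}$, $1\le i<n$), and consider the averaging process on $P_n$ started at the endpoint vector $v(0)=e_1$. For every fixed $\epsilon\in(0,1)$, the time $\min\{t\in\mathbb N:\mathbb E\|v(t)-\bar v\|_1\le\epsilon\}$ is $\Theta_\epsilon(n^3)$; i.e., it lies between $c_\epsilon n^3$ and $C_\epsilon n^3$ for constants $0<c_\epsilon\le C_\epsilon$ depending only on $\epsilon$.
   Context: The averaging process on a finite, undirected, connected graph $G=(V,E)$, $V=\{1,\dots,n\}$: the state vector $v(t)\in\mathbb R^n$, $t=0,1,2,\dots$, starts from a given $v(0)$; at each step $t\ge 1$ an edge $\{i,j\}\in E$ is chosen uniformly at random (independently of all previous choices) and both $v_i$ and $v_j$ are replaced by $(v_i+v_j)/2$, all other coordinates unchanged. Here $\bar v=\frac1n\mathbf 1$ and $e_1$ is the first standard basis vector. *)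

(* Defs.v *)
From mathcomp Require Import all_boot all_order all_algebra.
From mathcomp Require Import reals.
Set Implicit Arguments. Unset Strict Implicit. Unset Printing Implicit Defensive.
Import Order.TTheory GRing.Theory Num.Theory.
Local Open Scope ring_scope.

(* Path graph P_n: vertices 0,...,n-1 (paper's 1..n shifted by one),
   edges indexed by k < n-1, edge k = {k, k+1}.  State vectors are
   nat -> R, only coordinates < n are meaningful. *)

Section Averaging.
Variable R : realType.

Definition avg_step (k : nat) (v : nat -> R) : nat -> R :=
  fun i => if (i == k) || (i == k.+1) then (v k + v k.+1) / 2 else v i.

Definition avg_run (s : seq nat) (v : nat -> R) : nat -> R :=
  foldl (fun w k => avg_step k w) v s.

Definition e1 : nat -> R := fun i => if i == 0%N then 1 else 0.

Definition l1_dist_unif (n : nat) (v : nat -> R) : R :=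
  \sum_(i < n) `| v i - n%:R^-1 |.

(* E || v(t) - vbar ||_1 for the averaging process on P_n started at e_1:
   the t edges are i.i.d. uniform on the n-1 edges, so the expectation is
   the uniform average over all t-tuples of edges. *)
Definition path_exp_dist (n t : nat) : R :=
  (\sum_(s : t.-tuple 'I_n.-1) l1_dist_unif n (avg_run (map val s) e1))
    / ((n.-1)%:R ^+ t).

Definition is_path_mixing_time (n : nat) (eps : R) (T : nat) : Prop :=
  path_exp_dist n T <= eps /\ (forall t, (t < T)%N -> eps < path_exp_dist n t).

End Averaging.

(* Main.v *)
Require Import Defs.
From mathcomp Require Import all_boot all_order all_algebra.
From mathcomp Require Import reals.
From mathcomp Require Import ring lra zify.
Import Order.TTheory GRing.Theory Num.Theory.
Local Open Scope ring_scope.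

Lemma sum_tuple_rcons (R : realType) (I : finType) (t : nat) (G : seq I -> R) :
  \sum_(s : t.+1.-tuple I) G s = \sum_(s : t.-tuple I) \sum_(k : I) G (rcons s k).
Proof.
rewrite pair_big /=.
pose h (p : t.-tuple I * I) : t.+1.-tuple I := [tuple of rcons p.1 p.2].
pose h' (s : t.+1.-tuple I) : t.-tuple I * I :=
  ([tuple of belast (thead s) (behead s)], last (thead s) (behead s)).
rewrite (reindex h) /=; last first.
  exists h'.
  - move=> [s k] _; rewrite /h /h' /=.
    set u := [tuple of rcons s k].
    have E : rcons s k = thead u :: behead u by rewrite [LHS](congr1 val (tuple_eta u)).
    have E2 := E; rewrite lastI in E2.
    move/rcons_inj: E2 => [E3 E4].
    congr pair; last by [].
    by apply: val_inj => /=.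
  - move=> s _; rewrite /h /h' /=.
    apply: val_inj => /=.
    by rewrite -lastI [RHS](congr1 val (tuple_eta s)).
by [].
Qed.

Lemma sum_two (R : realType) n k (h : nat -> R) : (k.+1 < n)%N ->
  (forall i, i != k -> i != k.+1 -> h i = 0) -> \sum_(i < n) h i = h k + h k.+1.
Proof.
move=> Hk H0.
have Hk0 : (k < n)%N by apply: ltnW.
rewrite (bigD1 (Ordinal Hk0)) //= (bigD1 (Ordinal Hk)) /=; last first.
  by rewrite -val_eqE /= eqn_leq ltnn.
rewrite addrA big1 ?addr0 // => i /andP [Hi1 Hi2].
apply: H0.
  by move: Hi1; rewrite -val_eqE.
by move: Hi2; rewrite -val_eqE.
Qed.

Lemma sum_step (R : realType) n k (G : nat -> R -> R) (v : nat -> R) : (k.+1 < n)%N ->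
  \sum_(i < n) G i (avg_step k v i) = \sum_(i < n) G i (v i) +
   (G k ((v k + v k.+1)/2) + G k.+1 ((v k + v k.+1)/2) - G k (v k) - G k.+1 (v k.+1)).
Proof.
move=> Hk.
have -> : \sum_(i < n) G i (avg_step k v i) = \sum_(i < n) G i (v i) +
   \sum_(i < n) (G i (avg_step k v i) - G i (v i)).
  by rewrite -big_split /=; apply: eq_bigr => i _; rewrite addrC subrK.
congr (_ + _).
rewrite (@sum_two R n k (fun i => G i (avg_step k v i) - G i (v i))) //.
  rewrite /avg_step eqxx /= eqxx orbT. ring.
move=> i Hi1 Hi2; rewrite /avg_step.
by rewrite (negbTE Hi1) (negbTE Hi2) /= subrr.
Qed.

Set Implicit Arguments. Unset Strict Implicit.

Definition fsq (R : realType) n (v : nat -> R) := \sum_(i < n) (v i - n%:R^-1) ^+ 2.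
Definition Dir (R : realType) n (v : nat -> R) := \sum_(k < n.-1) (v k - v k.+1) ^+ 2.
Definition M2 (R : realType) n (v : nat -> R) := \sum_(i < n) (i%:R) ^+ 2 * v i.

Lemma fsq_step (R : realType) n k (v : nat -> R) : (k.+1 < n)%N ->
  fsq n (avg_step k v) = fsq n v - (v k - v k.+1) ^+ 2 / 2.
Proof.
move=> Hk; rewrite /fsq (@sum_step R n k (fun i x => (x - n%:R^-1) ^+ 2)) //.
congr (_ + _); set u := (n%:R)^-1; by field.
Qed.

Lemma M2_step (R : realType) n k (v : nat -> R) : (k.+1 < n)%N ->
  M2 n (avg_step k v) = M2 n v + (2 * k%:R + 1) * (v k - v k.+1) / 2.
Proof.
move=> Hk; rewrite /M2 (@sum_step R n k (fun i x => (i%:R) ^+ 2 * x)) //.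
congr (_ + _); rewrite -addn1 natrD; by field.
Qed.

Lemma sum_stepv (R : realType) n k (v : nat -> R) : (k.+1 < n)%N ->
  \sum_(i < n) avg_step k v i = \sum_(i < n) v i.
Proof.
move=> Hk; rewrite (@sum_step R n k (fun i x => x)) //.
rewrite -[RHS]addr0; congr (_ + _); by field.
Qed.

Lemma step_ge0 (R : realType) k (v : nat -> R) :
  (forall i, 0 <= v i) -> forall i, 0 <= avg_step k v i.
Proof.
move=> H i; rewrite /avg_step; case: ifP => _ //.
apply: divr_ge0 => //; apply: addr_ge0; exact: H.
Qed.

Definition good (R : realType) n (v : nat -> R) :=
  (forall i, 0 <= v i) /\ \sum_(i < n) v i = 1.

Lemma good_step (R : realType) n k (v : nat -> R) : (k.+1 < n)%N ->
  good n v -> good n (avg_step k v).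
Proof.
move=> Hk [H1 H2]; split; first exact: step_ge0.
by rewrite sum_stepv.
Qed.

Lemma good_e1 (R : realType) n : (0 < n)%N -> good n (e1 R).
Proof.
move=> Hn; split.
  by move=> i; rewrite /e1; case: ifP.
case: n Hn => // n _.
rewrite big_ord_recl /= /e1 eqxx big1 ?addr0 //.
Qed.

Lemma good_run (R : realType) n (s : seq nat) (v : nat -> R) :
  all (fun k => k.+1 < n)%N s -> good n v -> good n (avg_run s v).
Proof.
elim: s v => [|k s IH] v //= /andP [Hk Hs] Hv.
rewrite /avg_run /=. apply: IH => //. exact: good_step.
Qed.

Lemma tele (R : realType) (v : nat -> R) m :
  \sum_(k < m) (2 * k%:R + 1) * (v k - v k.+1) =
  2 * \sum_(j < m) v j - v 0%N - (2 * m%:R - 1) * v m.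
Proof.
elim: m => [|m IH].
  by rewrite !big_ord0; ring.
rewrite !big_ord_recr /= IH -addn1 natrD; ring.
Qed.

Lemma M2_steps (R : realType) n (v : nat -> R) : (2 <= n)%N -> good n v ->
  \sum_(k < n.-1) M2 n (avg_step k v) <= (n.-1)%:R * M2 n v + 1.
Proof.
move=> Hn [H1 H2].
rewrite (eq_bigr (fun k : 'I_n.-1 => M2 n v + (2 * k%:R + 1) * (v k - v k.+1) / 2)); last first.
  move=> k _; apply: M2_step; clear H2.
  by case: n Hn k => // n' _ k /=; rewrite ltnS.
rewrite big_split /= sumr_const card_ord -[M2 n v *+ _]mulr_natl.
rewrite -mulr_suml tele.
have Hs : \sum_(j < n.-1) v j <= \sum_(j < n) v j.
  clear H2; case: n Hn => // n' _ /=.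
  rewrite big_ord_recr /= lerDl; exact: H1.
have Hm : 1 <= (n.-1)%:R :> R.
  clear H2 Hs; by rewrite ler1n; case: n Hn => // [[]].
rewrite H2 in Hs. have := H1 0%N; have := H1 n.-1.
nra.
Qed.

Lemma fsq_steps (R : realType) n (v : nat -> R) :
  \sum_(k < n.-1) fsq n (avg_step k v) = (n.-1)%:R * fsq n v - Dir n v / 2.
Proof.
rewrite (eq_bigr (fun k : 'I_n.-1 => fsq n v - (v k - v k.+1) ^+ 2 / 2)); last first.
  move=> k _; apply: fsq_step.
  by case: n k => [|n'] [k Hk] /=; rewrite ?ltnS.
rewrite sumrB sumr_const card_ord /Dir -mulr_suml mulr_natl //.
Qed.

Definition Ex (R : realType) n t (F : (nat -> R) -> R) :=
  (\sum_(s : t.-tuple 'I_n.-1) F (avg_run (map val s) (e1 R))) / (n.-1)%:R ^+ t.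

Lemma m_neq0 (R : realType) n : (2 <= n)%N -> (n.-1)%:R != 0 :> R.
Proof. move=> Hn; rewrite pnatr_eq0 -lt0n; by case: n Hn => // [[]]. Qed.

Lemma m_gt0 (R : realType) n : (2 <= n)%N -> 0 < (n.-1)%:R :> R.
Proof. move=> Hn; rewrite ltr0n; by case: n Hn => // [[]]. Qed.

Lemma Ex_rec (R : realType) n t (F : (nat -> R) -> R) : (2 <= n)%N ->
  Ex n t.+1 F = Ex n t (fun v => (\sum_(k < n.-1) F (avg_step k v)) / (n.-1)%:R).
Proof.
move=> Hn; rewrite /Ex.
rewrite (@sum_tuple_rcons R _ _ (fun s : seq 'I_n.-1 => F (avg_run (map val s) (e1 R)))).
rewrite -mulr_suml exprS invfM mulrA; congr (_ * _).
congr (_ / _); apply: eq_bigr => s _; apply: eq_bigr => k _.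

by rewrite map_rcons /avg_run foldl_rcons.
Qed.

Lemma good_runs (R : realType) n t (s : t.-tuple 'I_n.-1) : (2 <= n)%N ->
  good n (avg_run (map val s) (e1 R)).
Proof.
move=> Hn; apply: good_run; last by apply: good_e1; apply: ltnW.
apply/allP => k /mapP [k' _ ->]; move: k'; clear s.
by case: n Hn => // n' _ k' /=; rewrite ltnS.
Qed.

Lemma Ex_le (R : realType) n t (F G : (nat -> R) -> R) : (2 <= n)%N ->
  (forall v, good n v -> F v <= G v) -> Ex n t F <= Ex n t G.
Proof.
move=> Hn H; rewrite /Ex ler_pM2r; last first.
  by rewrite invr_gt0 exprn_gt0 // m_gt0.
apply: ler_sum => s _; apply: H; exact: good_runs.
Qed.

Lemma ExD (R : realType) n t (F G : (nat -> R) -> R) :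
  Ex n t (fun v => F v + G v) = Ex n t F + Ex n t G.
Proof. by rewrite /Ex big_split mulrDl. Qed.

Lemma ExZ (R : realType) n t a (F : (nat -> R) -> R) :
  Ex n t (fun v => a * F v) = a * Ex n t F.
Proof. by rewrite /Ex -mulr_sumr mulrA. Qed.

Lemma ExC (R : realType) n t (c : R) : (2 <= n)%N -> Ex n t (fun _ => c) = c.
Proof.
move=> Hn; rewrite /Ex sumr_const card_tuple card_ord -[c *+ _]mulr_natl natrX mulrAC divff ?mul1r //.
by rewrite expf_neq0 // m_neq0.
Qed.

Lemma Ex0 (R : realType) n (F : (nat -> R) -> R) : Ex n 0 F = F (e1 R).
Proof.
rewrite /Ex expr0 divr1 (eq_bigr (fun _ => F (e1 R))); last by move=> s _; rewrite tuple0.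
by rewrite sumr_const card_tuple expn0.
Qed.

Lemma Ex_sq (R : realType) n t (F : (nat -> R) -> R) : (2 <= n)%N ->
  (Ex n t F) ^+ 2 <= Ex n t (fun v => (F v) ^+ 2).
Proof.
move=> Hn; set mu := Ex n t F.
have -> : mu ^+ 2 = Ex n t (fun v => (2 * mu) * F v + (- mu ^+ 2)).
  by rewrite ExD ExZ ExC // -/mu; ring.
apply: Ex_le => // v _. clearbody mu. have := sqr_ge0 (F v - mu). nra.
Qed.

Lemma Ex_ge0 (R : realType) n t (F : (nat -> R) -> R) : (2 <= n)%N ->
  (forall v, good n v -> 0 <= F v) -> 0 <= Ex n t F.
Proof.
move=> Hn H; rewrite -(@ExC R n t 0 Hn); exact: Ex_le.
Qed.

Lemma Ex_cube (R : realType) n t (F : (nat -> R) -> R) : (2 <= n)%N ->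
  (forall v, good n v -> 0 <= F v) ->
  (Ex n t F) ^+ 3 <= Ex n t (fun v => (F v) ^+ 3).
Proof.
move=> Hn H0; have mu0 := Ex_ge0 t Hn H0.
move: mu0; set mu := Ex n t F => mu0.
have -> : mu ^+ 3 = Ex n t (fun v => (3 * mu ^+ 2) * F v + (- 2 * mu ^+ 3)).
  by rewrite ExD ExZ ExC // -/mu; ring.
apply: Ex_le => // v Hv. have := H0 v Hv => h.
have : 0 <= (F v - mu) ^+ 2 * (F v + 2 * mu).
  apply: mulr_ge0; first exact: sqr_ge0. lra.
move=> h2. nra.
Qed.

Lemma count_sign (R : realType) n b : (b <= n)%N ->
  \sum_(i < n) (if (i < b)%N then 1 else -1 : R) = 2 * b%:R - n%:R.
Proof.
move=> Hb.
rewrite -(big_mkord xpredT (fun i => if (i < b)%N then 1 else -1 : R)).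
rewrite (@big_cat_nat _ _ _ b 0 n _ _ (leq0n b) Hb) /=.
rewrite (@eq_big_nat _ _ _ 0 b _ (fun _ => 1)); last by move=> i /andP [_ ->].
rewrite (@eq_big_nat _ _ _ b n _ (fun _ => -1)); last first.
  by move=> i /andP [H _]; rewrite ltnNge H.
rewrite !sumr_const_nat subn0 mulNrn natrB //. ring.
Qed.

Lemma l1_lower (R : realType) n b (v : nat -> R) : (1 <= b)%N -> (b <= n)%N -> good n v ->
  2 - 2 * M2 n v / b%:R ^+ 2 - 2 * b%:R / n%:R <= l1_dist_unif n v.
Proof.
move=> Hb1 Hbn [Hv0 Hv1].
have bpos : 0 < b%:R :> R by rewrite ltr0n.
have npos : 0 < n%:R :> R by rewrite ltr0n; apply: leq_trans Hbn.
pose g i : R := if (i < b)%N then 1 - 2 * (i%:R) ^+ 2 / b%:R ^+ 2 else -1.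
have gb : forall i, -1 <= g i <= 1.
  move=> i; rewrite /g; case: ifP => Hi; last by lra.
  have : i%:R < b%:R :> R by rewrite ltr_nat.
  have : 0 <= i%:R :> R by [].
  move=> h1 h2.
  have h3 : (i%:R) ^+ 2 / b%:R ^+ 2 <= 1 :> R.
    rewrite ler_pdivrMr ?exprn_gt0 // mul1r; nra.
  have h4 : 0 <= (i%:R) ^+ 2 / b%:R ^+ 2 :> R by apply: divr_ge0; nra.
  lra.
have gl : forall i, 1 - 2 * (i%:R) ^+ 2 / b%:R ^+ 2 <= g i.
  move=> i; rewrite /g; case: ifP => Hi; first by [].
  have : b%:R <= i%:R :> R by rewrite ler_nat leqNgt Hi.
  move=> h1.
  have h3 : 1 <= (i%:R) ^+ 2 / b%:R ^+ 2 :> R.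
    rewrite ler_pdivlMr ?exprn_gt0 // mul1r; nra.
  lra.
have gc : forall i, g i <= if (i < b)%N then 1 else -1.
  move=> i; rewrite /g; case: ifP => // _.
  have h4 : 0 <= (i%:R) ^+ 2 / b%:R ^+ 2 :> R by apply: divr_ge0; nra.
  lra.
have S1 : \sum_(i < n) g i * (v i - n%:R^-1) <= l1_dist_unif n v.
  apply: ler_sum => i _.
  apply: le_trans (ler_norm _) _.
  rewrite normrM; have := gb i; move=> /andP [h1 h2].
  have : `|g i| <= 1 by rewrite ler_norml h1 h2.
  move=> h; rewrite -[X in _ <= X]mul1r; apply: ler_wpM2r => //.
apply: le_trans S1.
have E : \sum_(i < n) g i * (v i - n%:R^-1) =
   \sum_(i < n) g i * v i - n%:R^-1 * \sum_(i < n) g i.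
  rewrite mulr_sumr -sumrB; apply: eq_bigr => i _; ring.
rewrite E.
have S2 : \sum_(i < n) v i - 2 / b%:R ^+ 2 * M2 n v <= \sum_(i < n) g i * v i.
  rewrite /M2 mulr_sumr -sumrB; apply: ler_sum => i _.
  have := gl i; have := Hv0 i; move=> h1 h2.
  have -> : v i - 2 / b%:R ^+ 2 * ((i%:R) ^+ 2 * v i) =
     (1 - 2 * (i%:R) ^+ 2 / b%:R ^+ 2) * v i by ring.
  by apply: ler_wpM2r.
have S3 : \sum_(i < n) g i <= 2 * b%:R - n%:R.
  rewrite -count_sign //; apply: ler_sum => i _; exact: gc.
have S4 : n%:R^-1 * \sum_(i < n) g i <= 2 * b%:R / n%:R - 1.
  have -> : 2 * b%:R / n%:R - 1 = n%:R^-1 * (2 * b%:R - n%:R) :> R.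
    by field; rewrite gt_eqF.
  apply: ler_wpM2l => //; rewrite invr_ge0; exact: ltW.
have -> : 2 * M2 n v / b%:R ^+ 2 = 2 / b%:R ^+ 2 * M2 n v by ring.
rewrite Hv1 in S2. clearbody g. lra.
Qed.

Lemma subrange_le (R : realType) (f : nat -> R) a b n :
  (forall j, 0 <= f j) -> (a <= b)%N -> (b <= n)%N ->
  \sum_(a <= j < b) f j <= \sum_(j < n) f j.
Proof.
move=> H0 Hab Hbn.
rewrite -(big_mkord xpredT f).
rewrite (@big_cat_nat _ _ _ a 0 n _ _ (leq0n a) (leq_trans Hab Hbn)) /=.
rewrite (@big_cat_nat _ _ _ b a n _ _ Hab Hbn) /=.
rewrite addrCA lerDl; apply: addr_ge0; apply: sumr_ge0 => j _; exact: H0.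
Qed.

Lemma tele_sq (R : realType) (w : nat -> R) i d :
  (w i - w (i + d)%N) ^+ 2 <= d%:R * \sum_(i <= k < i + d) (w k - w k.+1) ^+ 2.
Proof.
elim: d => [|d IH].
  by rewrite addn0 subrr expr0n /= mul0r.
rewrite addnS big_nat_recr /=; last by apply: leq_addr.
set x := w i - w (i + d)%N in IH *.
set y := w (i + d)%N - w (i + d).+1.
set S := \sum_(i <= k < i + d) (w k - w k.+1) ^+ 2 in IH *.
have -> : w i - w (i + d).+1 = x + y by rewrite /x /y; ring.
have S0 : 0 <= S by apply: sumr_ge0 => k _; exact: sqr_ge0.
rewrite -[d.+1]addn1 natrD.
have d0 : 0 <= d%:R :> R by [].
have h := sqr_ge0 (x - d%:R * y).
clearbody x y S.
case: (posnP d) => [d0'|dpos].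
  subst d; move: IH; rewrite mul0r => IH.
  have x0 : x = 0 by apply/eqP; rewrite -sqrf_eq0 eq_le IH sqr_ge0.
  subst x; rewrite add0r add0r mul1r; lra.
have dp : 0 < d%:R :> R by rewrite ltr0n.
have h3 : 0 <= (d%:R + 1) * (d%:R * S - x ^+ 2) by apply: mulr_ge0; lra.
have h2 : d%:R * ((d%:R + 1) * (S + y ^+ 2)) - d%:R * (x + y) ^+ 2 =
  (d%:R + 1) * (d%:R * S - x ^+ 2) + (x - d%:R * y) ^+ 2 by ring.
have : d%:R * ((d%:R + 1) * (S + y ^+ 2) - (x + y) ^+ 2) >= 0 by lra.
by rewrite (pmulr_rge0 _ dp) subr_ge0.
Qed.

Lemma dist_sq (R : realType) (w : nat -> R) n i j : (i <= j)%N -> (j < n)%N ->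
  (w i - w j) ^+ 2 <= (j - i)%:R * Dir n w.
Proof.
move=> Hij Hjn.
have := tele_sq w i (j - i); rewrite subnKC // => h.
apply: le_trans h _; apply: ler_wpM2l => //.
rewrite /Dir -(big_mkord xpredT (fun k => (w k - w k.+1) ^+ 2)).
have Hj : (j <= n.-1)%N by case: n Hjn => // n'; rewrite ltnS.
rewrite (@big_cat_nat _ _ _ i 0 n.-1 _ _ (leq0n i) (leq_trans Hij Hj)) /=.
rewrite (@big_cat_nat _ _ _ j i n.-1 _ _ Hij Hj) /=.
rewrite addrCA lerDl; apply: addr_ge0; apply: sumr_ge0 => k _; exact: sqr_ge0.
Qed.

Lemma Dir_ge0 (R : realType) (w : nat -> R) n : 0 <= Dir n w.
Proof. apply: sumr_ge0 => k _; exact: sqr_ge0. Qed.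

Lemma dist_sq_r (R : realType) (w : nat -> R) n i j r : (i < n)%N -> (j < n)%N ->
  (i <= j + r)%N -> (j <= i + r)%N -> (w i - w j) ^+ 2 <= r%:R * Dir n w.
Proof.
move=> Hi Hj H1 H2.
have E0 := Dir_ge0 w n.
case: (leqP i j) => Hij.
  apply: le_trans (dist_sq w Hij Hj) _; apply: ler_wpM2r => //.
  rewrite ler_nat leq_subLR; exact: H2.
have -> : (w i - w j) ^+ 2 = (w j - w i) ^+ 2 by ring.
apply: le_trans (dist_sq w (ltnW Hij) Hi) _; apply: ler_wpM2r => //.
rewrite ler_nat leq_subLR; exact: H1.
Qed.

Lemma argmax_abs (R : realType) (w : nat -> R) n : (0 < n)%N ->
  exists i0, (i0 < n)%N /\ forall i, (i < n)%N -> `|w i| <= `|w i0|.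
Proof.
elim: n => // n IH _.
case: (posnP n) => [->|np].
  by exists 0%N; split => // i; rewrite ltnS leqn0 => /eqP ->.
have [i0 [Hi0 H]] := IH np.
case: (leP `|w n| `|w i0|) => Hc.
  exists i0; split; first by apply: ltn_trans Hi0 _.
  move=> i; rewrite ltnS leq_eqVlt => /orP [/eqP ->|Hi] //; exact: H.
exists n; split => // i; rewrite ltnS leq_eqVlt => /orP [/eqP ->|Hi] //.
apply: le_trans (H i Hi) _; exact: ltW.
Qed.

Lemma poincare (R : realType) (w : nat -> R) n : (0 < n)%N -> \sum_(i < n) w i = 0 ->
  2 * \sum_(i < n) w i ^+ 2 <= n%:R ^+ 2 * Dir n w.
Proof.
move=> Hn H0.
set F := \sum_(i < n) w i ^+ 2.
have Hrow : forall i : 'I_n, \sum_(j < n) (w i - w j) ^+ 2 = n%:R * w i ^+ 2 + F.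
  move=> i.
  rewrite (eq_bigr (fun j : 'I_n => w i ^+ 2 + w j ^+ 2 - 2 * w i * w j)); last by move=> j _; ring.
  rewrite sumrB big_split /= sumr_const card_ord -mulr_sumr H0 mulr0 subr0.
  by rewrite -[w i ^+ 2 *+ n]mulr_natl.
have Hd : \sum_(i < n) \sum_(j < n) (w i - w j) ^+ 2 = 2 * n%:R * F.
  rewrite (eq_bigr _ (fun i _ => Hrow i)) big_split /= -mulr_sumr sumr_const card_ord.
  rewrite -/F -[F *+ n]mulr_natl; ring.
have Hb : \sum_(i < n) \sum_(j < n) (w i - w j) ^+ 2 <= n%:R * (n%:R * (n%:R * Dir n w)).
  have -> : n%:R * (n%:R * (n%:R * Dir n w)) = \sum_(i < n) \sum_(j < n) (n%:R * Dir n w).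
    by rewrite !sumr_const !card_ord !mulr_natl.
  apply: ler_sum => i _; apply: ler_sum => j _.
  apply: dist_sq_r => //.
    by apply: leq_trans (leq_addl _ _); apply: ltnW.
  by apply: leq_trans (leq_addl _ _); apply: ltnW.
rewrite Hd in Hb.
have np : 0 < n%:R :> R by rewrite ltr0n.
have : n%:R * (2 * F) <= n%:R * (n%:R ^+ 2 * Dir n w).
  have -> : n%:R * (2 * F) = 2 * n%:R * F :> R by ring.
  have -> : n%:R * (n%:R ^+ 2 * Dir n w) = n%:R * (n%:R * (n%:R * Dir n w)) :> R by ring.
  exact: Hb.
by rewrite ler_pM2l.
Qed.

Lemma window (R : realType) (w : nat -> R) n r i0 : (r <= n)%N -> (i0 < n)%N ->
  r%:R * w i0 ^+ 2 <= 2 * \sum_(i < n) w i ^+ 2 + 2 * r%:R ^+ 2 * Dir n w.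
Proof.
move=> Hrn Hi0.
set a := minn i0 (n - r).
have Ha : (a + r <= n)%N.
  rewrite /a; lia.
have Hsum : \sum_(a <= j < a + r) w i0 ^+ 2 <=
    \sum_(a <= j < a + r) (2 * w j ^+ 2 + 2 * (r%:R * Dir n w)).
  rewrite big_nat_cond [X in _ <= X]big_nat_cond.
  apply: ler_sum => j /andP [/andP [Hj1 Hj2] _].
  have Hjn : (j < n)%N by apply: leq_trans Ha.
  have h := @dist_sq_r R w n i0 j r Hi0 Hjn.
  have h' : (w i0 - w j) ^+ 2 <= r%:R * Dir n w.
    apply: h.
      case: (leqP i0 (n - r)) => Hc.
        by apply: leq_trans (leq_addr _ _); move: Hj1; rewrite /a (minn_idPl Hc).
      move: Hj1; rewrite /a (minn_idPr (ltnW Hc)) => Hj1.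
      apply: leq_trans (ltnW Hi0) _.
      by rewrite -(subnK Hrn) leq_add2r.
    apply: ltnW; apply: leq_trans Hj2 _; rewrite leq_add2r /a; exact: geq_minl.
  have := sqr_ge0 (w i0 - 2 * w j). nra.
have e1 : \sum_(a <= j < a + r) w i0 ^+ 2 = r%:R * w i0 ^+ 2.
  by rewrite sumr_const_nat addKn mulr_natl.
have e2 : \sum_(a <= j < a + r) (2 * w j ^+ 2 + 2 * (r%:R * Dir n w)) =
    2 * \sum_(a <= j < a + r) w j ^+ 2 + r%:R * (2 * (r%:R * Dir n w)).
  rewrite big_split /= sumr_const_nat addKn -mulr_sumr; congr (_ + _); exact: esym (mulr_natl _ _).
rewrite e1 e2 in Hsum.
have : \sum_(a <= i < a + r) w i ^+ 2 <= \sum_(i < n) w i ^+ 2.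
  apply: subrange_le => //; [move=> j; exact: sqr_ge0 | exact: leq_addr].
move=> h.
have -> : 2 * r%:R ^+ 2 * Dir n w = r%:R * (2 * (r%:R * Dir n w)) by ring.
lra.
Qed.

Lemma eqle (R : realType) (x y : R) : x = y -> x <= y.
Proof. by move=> ->. Qed.

Lemma nash (R : realType) (w : nat -> R) n : (0 < n)%N -> \sum_(i < n) w i = 0 ->
  (\sum_(i < n) w i ^+ 2) ^+ 3 <= 25 * Dir n w * (\sum_(i < n) `|w i|) ^+ 4.
Proof.
move=> Hn H0.
have Poinc := poincare Hn H0.
have Win := @window R w n.
have [i0 [Hi0 Hmax]] := argmax_abs w Hn.
have E0 := Dir_ge0 w n.
set F := \sum_(i < n) w i ^+ 2 in Poinc Win *.
set E := Dir n w in Poinc Win E0 *.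
set L := \sum_(i < n) `|w i|.
set M := `|w i0| in Hmax.
have F0 : 0 <= F by apply: sumr_ge0 => i _; exact: sqr_ge0.
have L0 : 0 <= L by apply: sumr_ge0 => i _; exact: normr_ge0.
have M0 : 0 <= M by exact: normr_ge0.
have FM : F <= M * L.
  rewrite /F /L mulr_sumr; apply: ler_sum => i _.
  rewrite -(real_normK (num_real (w i))).
  have := Hmax i (ltn_ord i); have := normr_ge0 (w i); move=> h1 h2.
  rewrite expr2; apply: ler_wpM2r => //.
have ML : M <= L.
  rewrite /L (bigD1 (Ordinal Hi0)) //= lerDl; apply: sumr_ge0 => i _; exact: normr_ge0.
have MM : w i0 ^+ 2 = M ^+ 2 by rewrite /M real_normK // num_real.
have np : 0 < n%:R :> R by rewrite ltr0n.
have FF : F ^+ 3 <= M ^+ 3 * L ^+ 3.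
  rewrite -exprMn; apply: lerXn2r => //; rewrite nnegrE //; exact: mulr_ge0.
case: (ltP (n%:R * M) (4 * L)) => Hc.
  have h1 : n%:R ^+ 2 * F ^+ 2 <= 16 * L ^+ 4.
    have : F ^+ 2 <= M ^+ 2 * L ^+ 2.
      rewrite -exprMn; apply: lerXn2r => //; rewrite nnegrE //; exact: mulr_ge0.
    have : (n%:R * M) ^+ 2 <= (4 * L) ^+ 2.
      apply: lerXn2r; rewrite ?nnegrE //; [exact: mulr_ge0 | exact: mulr_ge0 | exact: ltW].
    move=> h2 h3.
    have : n%:R ^+ 2 * F ^+ 2 <= n%:R ^+ 2 * (M ^+ 2 * L ^+ 2).
      apply: ler_wpM2l => //; exact: sqr_ge0.
    move=> h4.
    have : (n%:R * M) ^+ 2 * L ^+ 2 <= (4 * L) ^+ 2 * L ^+ 2.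
      apply: ler_wpM2r => //; exact: sqr_ge0.
    move=> h5.
    have -> : 16 * L ^+ 4 = (4 * L) ^+ 2 * L ^+ 2 by ring.
    apply: le_trans h4 _; apply: le_trans _ h5; apply: eqle; ring.
  have h2 : 2 * F * (n%:R ^+ 2 * F ^+ 2) <= n%:R ^+ 2 * E * (16 * L ^+ 4).
    apply: ler_pM => //; [lra | apply: mulr_ge0 => //; exact: sqr_ge0].
  have h3 : n%:R ^+ 2 * (2 * F ^+ 3) <= n%:R ^+ 2 * (16 * E * L ^+ 4).
    apply: le_trans _ (le_trans h2 _); apply: eqle; ring.
  rewrite ler_pM2l ?exprn_gt0 // in h3.
  have : 0 <= E * L ^+ 4 by apply: mulr_ge0 => //; apply: exprn_ge0.
  move=> h4; lra.
have [M00|Mp] := eqVneq M 0.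
  have F00 : F = 0 by apply/eqP; rewrite eq_le F0 andbT; apply: le_trans FM _; rewrite M00 mul0r.
  rewrite F00 expr0n /=; apply: mulr_ge0; [apply: mulr_ge0 => //| apply: exprn_ge0 => //].
have Mpos : 0 < M by rewrite lt_def Mp M0.
have Lpos : 0 < L by apply: lt_le_trans ML.
have exP : exists r : nat, 4 * L <= r%:R * M by exists n.
case: (ex_minnP exP) => r Pr Hmin.
have rn : (r <= n)%N by apply: Hmin.
have r1 : (0 < r)%N.
  rewrite lt0n; apply/eqP => r0; move: Pr; rewrite r0 mul0r => h; lra.
have Pr' : r%:R * M < 5 * L.
  have rS : r%:R = (r.-1)%:R + 1 :> R by rewrite natr1 prednK.
  have : ~~ (4 * L <= (r.-1)%:R * M).
    apply/negP => h; have := Hmin _ h.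
    by rewrite -ltnS prednK // ltnn.
  rewrite -ltNge => h.
  rewrite rS; lra.
have W := Win r i0 rn Hi0; rewrite MM in W.
have W2 : 4 * L * M <= r%:R * M ^+ 2.
  rewrite expr2 mulrA; apply: ler_wpM2r => //.
have W3 : L * M <= r%:R ^+ 2 * E.
  have : r%:R * M ^+ 2 <= 2 * (M * L) + 2 * r%:R ^+ 2 * E by lra.
  lra.
have W4 : L * M * M ^+ 2 <= (r%:R * M) ^+ 2 * E.
  have -> : (r%:R * M) ^+ 2 * E = (r%:R ^+ 2 * E) * M ^+ 2 by ring.
  apply: ler_wpM2r => //; exact: sqr_ge0.
have W5 : (r%:R * M) ^+ 2 <= (5 * L) ^+ 2.
  apply: lerXn2r; rewrite ?nnegrE; [exact: mulr_ge0 | apply: mulr_ge0 => //; lra | exact: ltW].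
have W6 : L * M ^+ 3 <= L * (25 * L * E).
  apply: le_trans (_ : L * M * M ^+ 2 <= _); first by apply: eqle; ring.
  apply: le_trans W4 _.
  apply: le_trans (ler_wpM2r E0 W5) _; apply: eqle; ring.
rewrite ler_pM2l // in W6.
apply: le_trans FF _.
have : M ^+ 3 * L ^+ 3 <= 25 * L * E * L ^+ 3.
  apply: ler_wpM2r => //; exact: exprn_ge0.
move=> h; apply: le_trans h _; apply: eqle; ring.
Qed.

Lemma CS (R : realType) (a : nat -> R) n : (0 < n)%N ->
  (\sum_(i < n) a i) ^+ 2 <= n%:R * \sum_(i < n) a i ^+ 2.
Proof.
move=> Hn; have np : 0 < n%:R :> R by rewrite ltr0n.
set S := \sum_(i < n) a i; set Q := \sum_(i < n) a i ^+ 2.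
have H : 0 <= \sum_(i < n) (a i - S / n%:R) ^+ 2 by apply: sumr_ge0 => i _; exact: sqr_ge0.
have E : \sum_(i < n) (a i - S / n%:R) ^+ 2 = Q - S ^+ 2 / n%:R.
  rewrite (eq_bigr (fun i : 'I_n => a i ^+ 2 - (2 * S / n%:R) * a i + (S / n%:R) ^+ 2)); last by move=> i _; ring.
  rewrite big_split sumrB /= -mulr_sumr sumr_const card_ord -/S -/Q.
  rewrite -[(S / n%:R) ^+ 2 *+ n]mulr_natl. field; by rewrite gt_eqF.
rewrite E subr_ge0 in H.
have ip : 0 < n%:R^-1 :> R by rewrite invr_gt0.
have : S ^+ 2 / n%:R * n%:R <= Q * n%:R by rewrite ler_pM2r.
by rewrite mulrAC -mulrA divff ?gt_eqF // mulr1 mulrC.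
Qed.

Lemma sum_e1 (R : realType) n : (0 < n)%N -> \sum_(i < n) e1 R i = 1.
Proof. by move=> Hn; have [] := good_e1 R Hn. Qed.

Lemma l1_le2 (R : realType) n (v : nat -> R) : (0 < n)%N -> good n v -> l1_dist_unif n v <= 2.
Proof.
move=> Hn [H0 H1].
have np : 0 < n%:R :> R by rewrite ltr0n.
rewrite /l1_dist_unif.
apply: le_trans (_ : \sum_(i < n) (v i + n%:R^-1) <= _).
  apply: ler_sum => i _; apply: le_trans (ler_normB _ _) _.
  by rewrite (ger0_norm (H0 i)) ger0_norm // invr_ge0 ltW.
rewrite big_split /= H1 sumr_const card_ord -[_ *+ n]mulr_natl divff ?gt_eqF //.
Qed.

Lemma nash_v (R : realType) n (v : nat -> R) : (0 < n)%N -> good n v ->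
  fsq n v ^+ 3 <= 400 * Dir n v.
Proof.
move=> Hn Hv; have np : 0 < n%:R :> R by rewrite ltr0n.
pose w i := v i - n%:R^-1.
have Hw : \sum_(i < n) w i = 0.
  rewrite /w sumrB sumr_const card_ord; case: Hv => _ ->.
  by rewrite -[_ *+ n]mulr_natl divff ?gt_eqF // subrr.
have := nash Hn Hw.
have -> : Dir n w = Dir n v by apply: eq_bigr => k _; rewrite /w; congr (_ ^+ 2); ring.
have -> : \sum_(i < n) `|w i| = l1_dist_unif n v by [].
have L2 := l1_le2 Hn Hv.
have L0 : 0 <= l1_dist_unif n v by apply: sumr_ge0 => i _.
have E0 := Dir_ge0 v n.
rewrite /fsq -/w => h; apply: le_trans h _.
have : l1_dist_unif n v ^+ 4 <= 2 ^+ 4 by apply: lerXn2r; rewrite ?nnegrE.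
move=> h; rewrite (_ : 400 = 25 * 16); last by rewrite -natrM. rewrite -mulrA -mulrA; apply: ler_wpM2l => //.
rewrite mulrC; apply: ler_wpM2r => //. apply: le_trans h _. by rewrite -natrX.
Qed.

Lemma g_step (R : realType) n t : (2 <= n)%N ->
  Ex n t.+1 (@fsq R n) <= Ex n t (@fsq R n) - (Ex n t (@fsq R n)) ^+ 3 / (800 * (n.-1)%:R).
Proof.
move=> Hn; have mp := m_gt0 R Hn.
have n0 : (0 < n)%N by apply: ltnW.
rewrite Ex_rec //.
have H : forall v : nat -> R, good n v ->
   (\sum_(k < n.-1) fsq n (avg_step k v)) / (n.-1)%:R <=
   fsq n v + (- (800 * (n.-1)%:R)^-1) * (fsq n v) ^+ 3.
  move=> v Hv; rewrite fsq_steps.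
  have h := nash_v n0 Hv.
  rewrite ler_pdivrMr //.
  have -> : (fsq n v + - (800 * (n.-1)%:R)^-1 * fsq n v ^+ 3) * (n.-1)%:R =
     (n.-1)%:R * fsq n v - fsq n v ^+ 3 / 800.
    by field; rewrite gt_eqF.
  lra.
apply: le_trans (Ex_le t Hn H) _.
rewrite ExD ExZ.
have := Ex_cube t Hn (F := @fsq R n) (fun v _ => sumr_ge0 _ (fun i _ => sqr_ge0 _)).
move=> h.
have ip : 0 < (800 * (n.-1)%:R)^-1 :> R by rewrite invr_gt0 mulr_gt0.
have : (800 * (n.-1)%:R)^-1 * Ex n t (@fsq R n) ^+ 3 <=
       (800 * (n.-1)%:R)^-1 * Ex n t (fun v => fsq n v ^+ 3).
  by rewrite ler_pM2l.
move=> h2.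
rewrite mulrC in h2.
by rewrite mulNr lerD2l lerN2.
Qed.

Lemma g_inv (R : realType) n t : (2 <= n)%N ->
  (Ex n t (@fsq R n)) ^+ 2 * (t%:R / (400 * (n.-1)%:R)) <= 1.
Proof.
move=> Hn; have mp := m_gt0 R Hn.
have g0 : forall t, 0 <= Ex n t (@fsq R n).
  move=> t'; apply: Ex_ge0 => // v _; apply: sumr_ge0 => i _; exact: sqr_ge0.
elim: t => [|t IH].
  by rewrite mul0r mulr0 ler01.
have St := @g_step R n t Hn.
move: IH St (g0 t) (g0 t.+1).
set x := Ex n t (@fsq R n); set y := Ex n t.+1 (@fsq R n).
set K := t%:R / (400 * (n.-1)%:R).
set a := (800 * (n.-1)%:R)^-1.
have a0 : 0 < a by rewrite invr_gt0 mulr_gt0.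
have K0 : 0 <= K by apply: divr_ge0 => //; apply: mulr_ge0 => //; exact: ltW.
have -> : (t.+1)%:R / (400 * (n.-1)%:R) = K + 2 * a.
  by rewrite /K /a -natr1; field; rewrite gt_eqF.
have -> : x ^+ 3 / (800 * (n.-1)%:R) = a * x ^+ 3 by rewrite /a mulrC.
clearbody x y K a.
move=> IH St x0 y0.
set s := a * x ^+ 2.
have s0 : 0 <= s by apply: mulr_ge0; [exact: ltW | exact: sqr_ge0].
have e : x - a * x ^+ 3 = x * (1 - s) by rewrite /s; ring.
rewrite e in St.
have [xz|xp] := eqVneq x 0.
  have yz : y = 0 by apply/eqP; rewrite eq_le y0 andbT; move: St; rewrite xz mul0r.
  by rewrite yz expr0n /= mul0r ler01.
have xpos : 0 < x by rewrite lt_def xp x0.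
have s1 : s <= 1.
  have : 0 <= x * (1 - s) by apply: le_trans y0 St.
  by rewrite pmulr_rge0 // subr_ge0.
have hy : y ^+ 2 <= x ^+ 2 * (1 - s) ^+ 2.
  rewrite -exprMn; apply: lerXn2r => //; rewrite nnegrE //; apply: mulr_ge0 => //; lra.
have h1 : y ^+ 2 * (K + 2 * a) <= x ^+ 2 * (1 - s) ^+ 2 * (K + 2 * a).
  apply: ler_wpM2r => //; lra.
apply: le_trans h1 _.
have -> : x ^+ 2 * (1 - s) ^+ 2 * (K + 2 * a) = (1 - s) ^+ 2 * (x ^+ 2 * K) + 2 * s * (1 - s) ^+ 2.
  by rewrite /s; ring.
have h2 : (1 - s) ^+ 2 * (x ^+ 2 * K) <= (1 - s) ^+ 2.
  rewrite -[X in _ <= X]mulr1; apply: ler_wpM2l => //; exact: sqr_ge0.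
have h3 : (1 - s) ^+ 2 + 2 * s * (1 - s) ^+ 2 <= 1.
  have : 0 <= s ^+ 2 * (3 - 2 * s) by apply: mulr_ge0; [exact: sqr_ge0 | lra].
  move=> h; have -> : (1 - s) ^+ 2 + 2 * s * (1 - s) ^+ 2 = 1 - s ^+ 2 * (3 - 2 * s) by ring.
  lra.
lra.
Qed.

Lemma M2_e1 (R : realType) n : M2 n (e1 R) = 0.
Proof.
rewrite /M2 big1 // => i _; rewrite /e1.
case: eqP => [->|_]; first by rewrite expr0n mul0r.
by rewrite mulr0.
Qed.

Lemma h_bound (R : realType) n t : (2 <= n)%N ->
  Ex n t (@M2 R n) <= t%:R / (n.-1)%:R.
Proof.
move=> Hn; have mp := m_gt0 R Hn.
elim: t => [|t IH].
  by rewrite Ex0 M2_e1 mul0r.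
rewrite Ex_rec //.
have H : forall v : nat -> R, good n v ->
   (\sum_(k < n.-1) M2 n (avg_step k v)) / (n.-1)%:R <= M2 n v + (n.-1)%:R^-1.
  move=> v Hv; have h := M2_steps Hn Hv.
  rewrite ler_pdivrMr // mulrDl mulVf ?gt_eqF // mulrC //.
apply: le_trans (Ex_le t Hn H) _.
rewrite ExD ExC //.
have -> : t.+1%:R / (n.-1)%:R = t%:R / (n.-1)%:R + (n.-1)%:R^-1 :> R.
  by rewrite -natr1 mulrDl mul1r.
by rewrite lerD2r.
Qed.

Lemma dist_lower (R : realType) n t b : (2 <= n)%N -> (1 <= b)%N -> (b <= n)%N ->
  2 - 2 * (t%:R / (n.-1)%:R) / b%:R ^+ 2 - 2 * b%:R / n%:R <= path_exp_dist R n t.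
Proof.
move=> Hn Hb1 Hbn.
have bp : 0 < b%:R ^+ 2 :> R by rewrite exprn_gt0 // ltr0n.
have -> : path_exp_dist R n t = Ex n t (l1_dist_unif n) by [].
have H := fun v (Hv : good n v) => l1_lower Hb1 Hbn Hv.
have H' : forall v : nat -> R, good n v ->
    (- 2 / b%:R ^+ 2) * M2 n v + (2 - 2 * b%:R / n%:R) <= l1_dist_unif n v.
  move=> v Hv; apply: le_trans _ (@l1_lower R n b v Hb1 Hbn Hv); apply: eqle; ring.
apply: le_trans (Ex_le t Hn H').
rewrite ExD ExZ ExC //.
have h := @h_bound R n t Hn.
have : (2 / b%:R ^+ 2) * Ex n t (@M2 R n) <= (2 / b%:R ^+ 2) * (t%:R / (n.-1)%:R).
  by apply: ler_wpM2l => //; apply: divr_ge0 => //; exact: ltW.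
move=> h2.
have -> : - 2 / b%:R ^+ 2 * Ex n t (@M2 R n) = - ((2 / b%:R ^+ 2) * Ex n t (@M2 R n)) by ring.
have -> : 2 * (t%:R / (n.-1)%:R) / b%:R ^+ 2 = (2 / b%:R ^+ 2) * (t%:R / (n.-1)%:R) :> R by ring.
lra.
Qed.

Lemma dist_upper (R : realType) n t : (2 <= n)%N -> (0 < t)%N ->
  path_exp_dist R n t ^+ 4 <= n%:R ^+ 2 * (400 * (n.-1)%:R) / t%:R.
Proof.
move=> Hn Ht; have mp := m_gt0 R Hn.
have n0 : (0 < n)%N by apply: ltnW.
have np : 0 < n%:R :> R by rewrite ltr0n.
have tp : 0 < t%:R :> R by rewrite ltr0n.
have -> : path_exp_dist R n t = Ex n t (l1_dist_unif n) by [].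
set D := Ex n t (l1_dist_unif n).
have D0 : 0 <= D by apply: Ex_ge0 => // v _; apply: sumr_ge0.
have h1 := @Ex_sq R n t (l1_dist_unif n) Hn.
have h2 : Ex n t (fun v : nat -> R => l1_dist_unif n v ^+ 2) <= Ex n t (fun v : nat -> R => n%:R * fsq n v).
  apply: (Ex_le t Hn) => v _; rewrite /l1_dist_unif /fsq.
  apply: le_trans (CS (fun i => `|v i - n%:R^-1|) n0) _; apply: eqle; congr (_ * _).
  by apply: eq_bigr => i _; rewrite real_normK // num_real.
rewrite ExZ in h2.
set g := Ex n t (@fsq R n) in h2.
have g0 : 0 <= g by apply: Ex_ge0 => // v _; apply: sumr_ge0 => i _; exact: sqr_ge0.
have hg := @g_inv R n t Hn; rewrite -/g in hg.
have hD : D ^+ 2 <= n%:R * g by apply: le_trans h1 h2.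
have hD4 : D ^+ 4 <= (n%:R * g) ^+ 2.
  rewrite (_ : D ^+ 4 = (D ^+ 2) ^+ 2); last by rewrite -exprM.
  apply: lerXn2r => //; rewrite nnegrE //; [exact: sqr_ge0 | exact: mulr_ge0 ].
apply: le_trans hD4 _.
rewrite exprMn.
have hg2 : g ^+ 2 <= 400 * (n.-1)%:R / t%:R.
  have q : 0 < t%:R / (400 * (n.-1)%:R) :> R by apply: divr_gt0 => //; apply: mulr_gt0.
  rewrite -(ler_pM2r q); apply: le_trans hg _; apply: eqle.
  by field; rewrite !gt_eqF //; apply: mulr_gt0.
have -> : n%:R ^+ 2 * (400 * (n.-1)%:R) / t%:R = n%:R ^+ 2 * (400 * (n.-1)%:R / t%:R) :> R by ring.
apply: ler_wpM2l => //; exact: sqr_ge0.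
Qed.

Lemma LB0 (R : realType) (eps : R) n : (2 <= n)%N -> eps < 1 -> eps < path_exp_dist R n 0.
Proof.
move=> Hn He.
have := @dist_lower R n 0 1 Hn (leqnn 1) (ltnW Hn).
have np : 2 <= n%:R :> R by rewrite ler_nat.
have : 2 * 1%:R / n%:R <= 1 :> R.
  by rewrite ler_pdivrMr ?mul1r ?mulr1 //; lra.
move=> h1; rewrite mul0r mulr0 mul0r subr0 => h2; lra.
Qed.

Lemma LB1 (R : realType) (delta : R) (K0 n t : nat) : (2 <= n)%N -> (1 <= t)%N ->
  0 < delta -> 1 <= delta * K0%:R ->
  t%:R < (8 * K0%:R ^+ 3)^-1 * n%:R ^+ 3 :> R ->
  2 - 4 * delta < path_exp_dist R n t.
Proof.
move=> Hn Ht dp dK Htc.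
have K0p : (0 < K0)%N.
  rewrite lt0n; apply/eqP => K00; move: dK; rewrite K00 mulr0; lra.
have Kp : 0 < K0%:R :> R by rewrite ltr0n.
have np : 0 < n%:R :> R by rewrite ltr0n; apply: ltnW.
have tp : 1 <= t%:R :> R by rewrite ler1n.
have K3 : 0 < 8 * K0%:R ^+ 3 :> R by apply: mulr_gt0 => //; apply: exprn_gt0.
have Htc' : t%:R * (8 * K0%:R ^+ 3) < n%:R ^+ 3 :> R.
  move: Htc; rewrite mulrC ltr_pdivlMr //. 
have Kn : (K0 <= n)%N.
  have : K0%:R ^+ 3 < n%:R ^+ 3 :> R.
    apply: le_lt_trans Htc'.
    have : 0 <= K0%:R ^+ 3 :> R by apply: exprn_ge0.
    move=> h; nra.
  rewrite ltr_pXn2r ?nnegrE // ltr_nat; exact: ltnW.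
set b := (n %/ K0)%N.
have b1 : (1 <= b)%N by rewrite divn_gt0.
have bn : (b <= n)%N by apply: leq_div.
have bK : b%:R * K0%:R <= n%:R :> R by rewrite -natrM ler_nat leq_divM.
have bK2 : n%:R < (b%:R + 1) * K0%:R :> R by rewrite natr1 -natrM ltr_nat ltn_ceil.
have bp : 1 <= b%:R :> R by rewrite ler1n.
have m2 : n%:R <= 2 * (n.-1)%:R :> R.
  have : (n <= 2 * n.-1)%N by move: Hn; clear; lia.
  by rewrite -(ler_nat R) natrM.
have mp : 0 < (n.-1)%:R :> R by apply: m_gt0.
have dl := @dist_lower R n t b Hn b1 bn.
have hb : b%:R <= delta * n%:R.
  have : b%:R * 1 <= b%:R * (delta * K0%:R) by apply: ler_wpM2l => //; lra.
  move=> h; nra.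
have hb' : 2 * b%:R / n%:R <= 2 * delta.
  by rewrite ler_pdivrMr //; lra.
have q1 : n%:R < 2 * b%:R * K0%:R :> R by nra.
have q2 : n%:R ^+ 3 <= 8 * (n.-1)%:R * b%:R ^+ 2 * K0%:R ^+ 2 :> R.
  have : n%:R ^+ 2 <= (2 * b%:R * K0%:R) ^+ 2 :> R.
    apply: lerXn2r; rewrite ?nnegrE. all: try lra.
  move=> h.
  have : n%:R * n%:R ^+ 2 <= (2 * (n.-1)%:R) * (2 * b%:R * K0%:R) ^+ 2 :> R.
    apply: ler_pM; [lra | exact: sqr_ge0 | exact: m2 | exact: h].
  move=> h2; apply: le_trans (_ : n%:R * n%:R ^+ 2 <= _); first by apply: eqle; ring.
  apply: le_trans h2 _; apply: eqle; ring.
have q3 : t%:R * K0%:R < (n.-1)%:R * b%:R ^+ 2 :> R.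
  have : t%:R * (8 * K0%:R ^+ 3) < 8 * (n.-1)%:R * b%:R ^+ 2 * K0%:R ^+ 2 :> R by lra.
  move=> h.
  have K2 : 0 < 8 * K0%:R ^+ 2 :> R by apply: mulr_gt0 => //; apply: exprn_gt0.
  rewrite -(ltr_pM2r K2).
  have -> : t%:R * K0%:R * (8 * K0%:R ^+ 2) = t%:R * (8 * K0%:R ^+ 3) :> R by ring.
  have -> : (n.-1)%:R * b%:R ^+ 2 * (8 * K0%:R ^+ 2) = 8 * (n.-1)%:R * b%:R ^+ 2 * K0%:R ^+ 2 :> R by ring.
  exact: h.
have q4 : t%:R < delta * ((n.-1)%:R * b%:R ^+ 2).
  have : t%:R * 1 <= t%:R * (delta * K0%:R) by apply: ler_wpM2l => //; lra.
  move=> h.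
  have : delta * (t%:R * K0%:R) < delta * ((n.-1)%:R * b%:R ^+ 2) by rewrite ltr_pM2l.
  move=> h2; apply: le_lt_trans _ h2.
  apply: le_trans (_ : t%:R <= t%:R * (delta * K0%:R)) _; first by lra.
  apply: eqle; ring.
have q5 : 2 * (t%:R / (n.-1)%:R) / b%:R ^+ 2 < 2 * delta.
  have bb : 0 < b%:R ^+ 2 :> R by apply: exprn_gt0; lra.
  rewrite ltr_pdivrMr // -mulrA ltr_pM2l // ltr_pdivrMr //.
  apply: lt_le_trans q4 _; apply: eqle; ring.
lra.
Qed.

Unset Implicit Arguments. Set Strict Implicit.

Lemma UB (R : realType) (eps : R) (N1 n : nat) : (2 <= n)%N -> 0 < eps ->
  400 < eps ^+ 4 * N1%:R -> path_exp_dist R n (N1 * n ^ 3) <= eps.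
Proof.
move=> Hn ep HN.
have N1p : (0 < N1)%N.
  rewrite lt0n; apply/eqP => N0; move: HN; rewrite N0 mulr0; lra.
have t0 : (0 < N1 * n ^ 3)%N by rewrite muln_gt0 N1p expn_gt0 (ltnW Hn).
have h := @dist_upper R n _ Hn t0.
have np : 0 < n%:R :> R by rewrite ltr0n; apply: ltnW.
have tp : 0 < (N1 * n ^ 3)%:R :> R by rewrite ltr0n.
have mn : (n.-1)%:R <= n%:R :> R by rewrite ler_nat leq_pred.
have h2 : n%:R ^+ 2 * (400 * (n.-1)%:R) / (N1 * n ^ 3)%:R <= eps ^+ 4.
  rewrite ler_pdivrMr // natrM natrX.
  have n3 : 0 < n%:R ^+ 3 :> R by apply: exprn_gt0.
  have : n%:R ^+ 2 * (400 * (n.-1)%:R) <= 400 * n%:R ^+ 3 :> R.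
    have -> : 400 * n%:R ^+ 3 = n%:R ^+ 2 * (400 * n%:R) :> R by ring.
    apply: ler_wpM2l; [exact: sqr_ge0 | lra].
  move=> h3; apply: le_trans h3 _.
  have : 400 * n%:R ^+ 3 <= eps ^+ 4 * N1%:R * n%:R ^+ 3.
    by apply: ler_wpM2r; [exact: ltW | exact: ltW].
  move=> h4; apply: le_trans h4 _; apply: eqle; ring.
have := le_trans h h2.
have D0 : 0 <= path_exp_dist R n (N1 * n ^ 3).
  apply: Ex_ge0 => // v _; exact: sumr_ge0.
by rewrite ler_pXn2r // nnegrE ltW.
Qed.

Theorem proposition7 (R : realType) (eps : R) :
  0 < eps < 1 ->
  exists c C : R, 0 < c /\ c <= C /\
    forall n : nat, (2 <= n)%N ->
      exists T : nat, is_path_mixing_time n eps T /\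
        c * n%:R ^+ 3 <= T%:R /\ T%:R <= C * n%:R ^+ 3.
Proof.
move=> /andP [e0 e1].
set delta := (2 - eps) / 8.
have dp : 0 < delta by rewrite /delta; apply: divr_gt0; lra.
have dpi : 0 <= delta^-1 by rewrite invr_ge0 ltW.
set K0 := Num.bound (delta^-1).
have HK0 : delta^-1 < K0%:R := archi_boundP dpi.
have dK : 1 <= delta * K0%:R.
  have : delta * delta^-1 < delta * K0%:R by rewrite ltr_pM2l.
  by rewrite divff ?gt_eqF // => h; apply: ltW.
have K0p : 0 < K0%:R :> R by apply: le_lt_trans HK0.
have e4 : 0 < eps ^+ 4 by apply: exprn_gt0.
have e4i : 0 <= 400 / eps ^+ 4 by apply: divr_ge0 => //; exact: ltW.
set N1 := Num.bound (400 / eps ^+ 4).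
have HN1 : 400 / eps ^+ 4 < N1%:R := archi_boundP e4i.
have HN : 400 < eps ^+ 4 * N1%:R.
  by rewrite mulrC -ltr_pdivrMr.
have N1p : 0 < N1%:R :> R by apply: le_lt_trans HN1.
exists (8 * K0%:R ^+ 3)^-1, N1%:R.
have K1 : 1 <= K0%:R :> R.
  by rewrite ler1n -(ltr0n R).
have N11 : 1 <= N1%:R :> R.
  by rewrite ler1n -(ltr0n R).
have K3 : 1 <= 8 * K0%:R ^+ 3 :> R.
  have : 1 <= K0%:R ^+ 3 :> R by apply: exprn_ege1.
  lra.
split; first by rewrite invr_gt0; lra.
split.
  apply: le_trans N11; rewrite invf_le1; lra.
move=> n Hn.
have exP : exists t, path_exp_dist R n t <= eps.
  by exists (N1 * n ^ 3)%N; apply: (@UB R eps N1 n Hn e0 HN).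
case: (ex_minnP exP) => T PT Hmin.
have LB : forall t, t%:R < (8 * K0%:R ^+ 3)^-1 * n%:R ^+ 3 :> R -> eps < path_exp_dist R n t.
  move=> t Ht; case: (posnP t) => [->|tp]; first exact: LB0.
  have hd : 2 - 4 * delta = 1 + eps / 2 by rewrite /delta; field.
  have := LB1 Hn tp dp dK Ht; rewrite hd; lra.
exists T; split; [split => // | split].
- move=> t Ht; rewrite ltNge; apply/negP => h.
  by have := Hmin t h; rewrite leqNgt Ht.
- rewrite leNgt; apply/negP => h.
  have := LB T h; lra.
- have := Hmin _ (@UB R eps N1 n Hn e0 HN).
  by rewrite -(ler_nat R) natrM natrX.
Qed.
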